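(* Let $\mathfrak{g}$ be a non-abelian real Lie algebra of dimension $m=2n$. Then every almost-complex structure on $\mathfrak{g}$ is integrable (i.e. $\mathcal{C}(\mathfrak{g})=\mathcal{C}$) if and only if $\mathfrak{g}$ has a basis $\{e_0,e_1,\dots,e_{m-1}\}$ such that $[e_0,e_i]=e_i=-[e_i,e_0]$ for all $i\ge1$, with all other brackets of basis elements zero.
   Context: $\mathcal{C}$ is the set of linear maps $J\colon\mathfrak{g}\to\mathfrak{g}$ with $J^2=-1$ (almost-complex structures), and $\mathcal{C}(\mathfrak{g})\subseteq\mathcal{C}$ is the subset of those satisfying $[JX,JY]=[X,Y]+J[JX,Y]+J[X,JY]$ for all $X,Y\in\mathfrak{g}$. *)

(* Defs.v *)
From HB Require Import structures.
From mathcomp Require Import all_boot all_order all_algebra.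
From mathcomp Require Export reals.
Set Implicit Arguments. Unset Strict Implicit. Unset Printing Implicit Defensive.
Import Order.TTheory GRing.Theory Num.Theory.
Local Open Scope ring_scope.

Definition is_lie_bracket (R : nzRingType) (V : lmodType R) (br : V -> V -> V) : Prop :=
  [/\ forall x, linear (br x),
      forall y, linear (fun x => br x y),
      forall x, br x x = 0
    & forall x y z, br x (br y z) + br y (br z x) + br z (br x y) = 0].

Definition almost_complex (R : nzRingType) (V : lmodType R) (J : V -> V) : Prop :=
  linear J /\ forall x, J (J x) = - x.

(* integrability (vanishing Nijenhuis tensor) as in the paper *)
Definition integrable (R : nzRingType) (V : lmodType R) (br : V -> V -> V) (J : V -> V) : Prop :=
  forall X Y, br (J X) (J Y) = br X Y + J (br (J X) Y) + J (br X (J Y)).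

(* Main.v *)
Require Import Defs.
From HB Require Import structures.
From mathcomp Require Import all_boot all_order all_algebra.
From mathcomp Require Import reals.
From mathcomp Require Import zify ring lra.
From Stdlib Require Import Classical.
Import Order.TTheory GRing.Theory Num.Theory.
Local Open Scope ring_scope.
Set Implicit Arguments. Unset Strict Implicit. Unset Printing Implicit Defensive.

Definition mkL {R : realType} {V W : lmodType R} {f : V -> W} (H : linear f)
  : {linear V -> W} := HB.pack f (GRing.isLinear.Build _ _ _ _ f H).

Lemma linD (R : realType) (V W : lmodType R) (f : V -> W) (H : linear f) u v :
  f (u + v) = f u + f v.
Proof. exact: (linearD (mkL H)). Qed.
Lemma linZ (R : realType) (V W : lmodType R) (f : V -> W) (H : linear f) a u :
  f (a *: u) = a *: f u.
Proof. exact: (linearZ_LR (mkL H)). Qed.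
Lemma lin0 (R : realType) (V W : lmodType R) (f : V -> W) (H : linear f) :
  f 0 = 0.
Proof. exact: (linear0 (mkL H)). Qed.
Lemma linN (R : realType) (V W : lmodType R) (f : V -> W) (H : linear f) u :
  f (- u) = - f u.
Proof. exact: (linearN (mkL H)). Qed.
Lemma lin_sum (R : realType) (V W : lmodType R) (f : V -> W) (H : linear f)
   (I : finType) (F : I -> V) :
  f (\sum_i F i) = \sum_i f (F i).
Proof. exact: (linear_sum (mkL H)). Qed.

Lemma lin_comp (R : realType) (U V W : lmodType R) (f : V -> W) (g : U -> V) :
  linear f -> linear g -> linear (fun x => f (g x)).
Proof. by move=> Hf Hg a u v /=; rewrite Hg Hf. Qed.

Lemma lin_eq_span (R : realType) (V : vectType R) (W : lmodType R)
  (f g : V -> W) (L : seq V) :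
  linear f -> linear g -> {in L, f =1 g} -> {in <<L>>%VS, f =1 g}.
Proof.
move=> Hf Hg eqfg v; rewrite -{1}[L]/(val (in_tuple L)) => /coord_span ->.
rewrite (lin_sum Hf) (lin_sum Hg); apply: eq_bigr => i _.
rewrite (linZ Hf) (linZ Hg) eqfg //; apply: mem_nth.
exact: ltn_ord.
Qed.

Lemma mem_span2 (R : realType) (V : vectType R) (a b v : V) :
  v \in <<[:: a; b]>>%VS -> exists c d, v = c *: a + d *: b.
Proof.
rewrite span_cons span_seq1 => /memv_addP [u /vlineP [c ->] [w /vlineP [d ->] ->]].
by exists c, d.
Qed.

Lemma ext_free (R : realType) (V : vectType R) (L : seq V) :
  free L -> (size L < \dim (fullv : {vspace V}))%N -> exists v, free (v :: L).
Proof.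
move=> fL hs.
have [v hv] : exists v, v \notin <<L>>%VS.
  apply: NNPP => H.
  have sub : (fullv <= <<L>>)%VS.
    apply/subvP => v _; have := not_ex_all_not _ _ H v.
    by case: (v \in <<L>>%VS).
  by move: (leq_trans (dimvS sub) (dim_span L)); rewrite leqNgt hs.
by exists v; rewrite free_cons hv.
Qed.

Definition flat (V : Type) (P : seq (V * V)) : seq V :=
  flatten [seq [:: p.1; p.2] | p <- P].
Definition flatJ (V : zmodType) (P : seq (V * V)) : seq V :=
  flatten [seq [:: p.2; - p.1] | p <- P].

Lemma size_flat (V : Type) (P : seq (V * V)) : size (flat P) = (2 * size P)%N.
Proof. elim: P => [|p P IH] //=; rewrite IH; lia. Qed.
Lemma size_flatJ (V : zmodType) (P : seq (V * V)) : size (flatJ P) = (2 * size P)%N.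
Proof. elim: P => [|p P IH] //=; rewrite /flatJ /= in IH *; rewrite IH; lia. Qed.

Lemma extP (R : realType) (V : vectType R) (k : nat) (P : seq (V * V)) :
  \dim (fullv : {vspace V}) = (size (flat P) + 2 * k)%N -> free (flat P) ->
  exists Q, free (flat (Q ++ P)) /\ size (flat (Q ++ P)) = \dim (fullv : {vspace V}).
Proof.
elim: k P => [|k IH] P hd fP.
  by exists [::]; rewrite addn0 in hd.
have [b fb] : exists b, free (b :: flat P).
  by apply: ext_free => //; rewrite hd; lia.
have [a fa] : exists a, free (a :: b :: flat P).
  by apply: ext_free => //; rewrite hd /=; lia.
have [Q [h1 h2]] : exists Q, free (flat (Q ++ (a, b) :: P)) /\ size (flat (Q ++ (a, b) :: P)) = \dim (fullv : {vspace V}).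
  by apply: IH => //; rewrite hd !size_flat /=; lia.
by exists (rcons Q (a, b)); rewrite cat_rcons.
Qed.

Lemma pairsJ (V : zmodType) (J : V -> V) (P : seq (V * V)) :
  map J (flat P) = flatJ P -> forall p, p \in P -> J p.1 = p.2 /\ J p.2 = - p.1.
Proof.
elim: P => [|q P IH] //= [] h1 h2 hrest p; rewrite inE => /orP [/eqP -> | hp].
  by [].
exact: IH.
Qed.

Lemma exJ (R : realType) (V : vectType R) (n : nat) (P : seq (V * V)) :
  \dim (fullv : {vspace V}) = (2 * n)%N -> free (flat P) ->
  exists J : V -> V, almost_complex J /\ forall p, p \in P -> J p.1 = p.2.
Proof.
move=> hd fP.
have hs : (size (flat P) <= \dim (fullv : {vspace V}))%N.
  by rewrite -(eqnP fP); apply: dimvS; apply: subvf.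
have [Q [fL sL]] := @extP R V (n - size P) P (ltac:(rewrite hd size_flat in hs *; lia)) fP.
set L := flat (Q ++ P) in fL sL.
have [J HJ] := linear_of_free L (flatJ (Q ++ P)).
have hm := HJ fL (ltac:(by rewrite size_flatJ size_flat)).
have hp := pairsJ hm.
have spanL : <<L>>%VS = fullv.
  by apply/eqP; rewrite eqEdim subvf /= (eqnP fL) sL.
exists J; split; last by move=> p pin; have [] := hp p (ltac:(by rewrite mem_cat pin orbT)).
split; first exact: linearP.
move=> v.
have := @lin_eq_span R V V (fun v => J (J v)) (fun v => - v) L.
apply.
- by apply: lin_comp; apply: linearP.
- by move=> a x y; rewrite opprD scalerN.
- move=> b /flattenP [s /mapP [p pin ->]]; rewrite !inE => /orP [] /eqP ->.
    by have [h1 h2] := hp p pin; rewrite ?h1 ?h2 ?linearN ?h1 ?opprK.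
  by have [h1 h2] := hp p pin; rewrite ?h1 ?h2 ?linearN ?h1 ?opprK.
- by rewrite spanL memvf.
Qed.

Definition Sc (R : realType) (V : lmodType R) (rho : V -> R^o) (y : V) (a : R) (v : V) : V :=
  v + ((a - 1) * rho v) *: y.

Lemma Sc_lin (R : realType) (V : lmodType R) (rho : V -> R^o) y a :
  linear rho -> linear (Sc rho y a).
Proof.
move=> hr c u v; rewrite /Sc hr.
have -> : (a - 1) * (c *: rho u + rho v) = c * ((a - 1) * rho u) + (a - 1) * rho v.
  by rewrite /GRing.scale /= mulrDr mulrCA.
by rewrite scalerDl addrACA scalerDr scalerA.
Qed.

Lemma Sc_rho (R : realType) (V : lmodType R) (rho : V -> R^o) y a v :
  linear rho -> rho y = 1 -> rho (Sc rho y a v) = a * rho v.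
Proof.
move=> hr hy; rewrite /Sc (linD hr) (linZ hr) hy /GRing.scale /=.
by rewrite mulr1 mulrBl mul1r addrCA subrr addr0.
Qed.

Lemma Sc_fix (R : realType) (V : lmodType R) (rho : V -> R^o) y a v :
  rho v = 0 -> Sc rho y a v = v.
Proof. by move=> h; rewrite /Sc h mulr0 scale0r addr0. Qed.

Lemma Sc_y (R : realType) (V : lmodType R) (rho : V -> R^o) y a :
  rho y = 1 -> Sc rho y a y = a *: y.
Proof. by move=> h; rewrite /Sc h mulr1 -{1}[y]scale1r -scalerDl; congr (_ *: _); ring. Qed.

Lemma Sc_inv (R : realType) (V : lmodType R) (rho : V -> R^o) y a b v :
  linear rho -> rho y = 1 -> a * b = 1 -> Sc rho y a (Sc rho y b v) = v.
Proof.
move=> hr hy hab; rewrite {1}/Sc (Sc_rho _ _ hr hy) /Sc -addrA -scalerDl.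
suff -> : (b - 1) * rho v + (a - 1) * (b * rho v) = 0 by rewrite scale0r addr0.
have -> : (b - 1) * rho v + (a - 1) * (b * rho v) = (a * b - 1) * rho v.
  by move: (rho v : R) => X; ring.
by rewrite hab subrr mul0r.
Qed.


Lemma span2 (R : realType) (V : vectType R) (br : V -> V -> V) (n : nat) :
  is_lie_bracket br -> \dim (fullv : {vspace V}) = (2 * n)%N ->
  (forall J, almost_complex J -> integrable br J) ->
  forall x y, free [:: x; y] -> br x y \in <<[:: x; y]>>%VS.
Proof.
move=> [bl blr alt _] hd HJ x y fxy.
case: (leqP n 1) => hn.
  have -> : <<[:: x; y]>>%VS = fullv.
    by apply/eqP; rewrite eqEdim subvf /= (eqnP fxy) hd /=; lia.
  by rewrite memvf.
apply: contraT => hr.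
set r := br x y in hr.
have f3 : free [:: x; r; y].
  rewrite -(perm_free (_ : perm_eq [:: r; x; y] _)); last first.
    exact: (permEl (perm_catCA [:: r] [:: x] [:: y])).
  by rewrite free_cons hr fxy.
have [s fs] : exists s, free [:: s; x; r; y].
  by apply: ext_free => //; rewrite hd /=; lia.
have [J1 [[J1lin J1sq] J1p]] := @exJ R V n [:: (s, x); (r, y)] hd fs.
have J1s : J1 s = x by have := J1p (s, x); rewrite !inE eqxx; apply.
have J1r : J1 r = y by have := J1p (r, y); rewrite !inE eqxx orbT; apply.
have J1y : J1 y = - r by rewrite -J1r J1sq.
have [rho hrho] := @linear_of_free R V R^o [:: s; x; r; y] [:: 0; 0; 0; 1].
have := hrho fs erefl; case=> rs rx rr ry.
have rhol : linear (rho : V -> R^o) by apply: linearP.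
pose A : R := rho (br x r).
pose B : R := rho (br s y).
pose C : R := rho (J1 (br s r)).
have key : forall t : R, t != 0 -> t * (- A) = B + t^-1 - C.
  move=> t t0.
  pose Jt := fun v => Sc rho y t^-1 (J1 (Sc rho y t v)).
  have Jtl : linear Jt.
    apply: lin_comp; first exact: Sc_lin.
    by apply: lin_comp => //; exact: Sc_lin.
  have ac : almost_complex Jt.
    split => // v; rewrite /Jt (Sc_inv _ rhol ry); last by rewrite mulfV.
    rewrite J1sq (linN (Sc_lin _ _ rhol)) (Sc_inv _ rhol ry) //.
    by rewrite mulVf.
  have H := HJ Jt ac s y.
  have Jts : Jt s = x by rewrite /Jt (Sc_fix _ _ rs) J1s (Sc_fix _ _ rx).
  have Jty : Jt y = t *: - r.
    rewrite /Jt (Sc_y _ ry) (linZ J1lin) J1y Sc_fix //.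
    by rewrite (linZ rhol) (linN rhol) rr oppr0 scaler0.
  have Jtr : Jt r = t^-1 *: y.
    by rewrite /Jt (Sc_fix _ _ rr) J1r (Sc_y _ ry).
  rewrite Jts Jty -/r Jtr in H.
  have e1 : rho (Jt (br s r)) = t^-1 * C.
    rewrite /Jt (Sc_rho _ _ rhol ry) /Sc (linD J1lin) (linZ J1lin) J1y.
    by rewrite (linD rhol) (linZ rhol) (linN rhol) rr oppr0 scaler0 addr0.
  have := congr1 rho H.
  rewrite (linZ (bl x)) (linN (bl x)) (linZ (bl s)) (linN (bl s)).
  rewrite (linZ Jtl) (linN Jtl) !(linD rhol) !(linZ rhol) !(linN rhol) e1 ry => h.
  have h2 : t * - A = B + t^-1 * 1 + t * - (t^-1 * C) by exact: h.
  by rewrite h2 mulr1 mulrN mulrA mulfV // mul1r.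
have k1 := key 1 (oner_neq0 _).
have k2 := key (-1) (ltac:(by rewrite oppr_eq0 oner_neq0)).
have k3 := key 2 (ltac:(by rewrite pnatr_eq0)).
have i2 : 2 * (2 : R)^-1 = 1 by rewrite mulfV // pnatr_eq0.
rewrite invr1 in k1; rewrite invrN1 in k2.
move: k1 k2 k3 i2; set h := (2 : R)^-1 => k1 k2 k3 i2.
apply/negP => _.
have : (2 : R) * 2 = 1 by lra.
lra.
Qed.

Lemma br_antisym (R : realType) (V : lmodType R) (br : V -> V -> V) :
  is_lie_bracket br -> forall a b, br a b = - br b a.
Proof.
move=> [bl blr alt _] a b.
have := alt (a + b); rewrite (linD (bl _)) !(linD (blr _)) !alt add0r addr0.
by rewrite addrC => /eqP; rewrite addr_eq0 => /eqP.
Qed.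

Lemma free2_sep (R : realType) (V : vectType R) (u w : V) (phi psi : V -> R^o) :
  linear phi -> linear psi -> phi u = 1 -> phi w = 0 -> psi w = 1 ->
  free [:: u; w].
Proof.
move=> lp lq pu pw qw; rewrite free_cons seq1_free span_seq1; apply/andP; split.
  apply/vlineP => [[k ek]]; move: pu; rewrite ek (linZ lp) pw.
  by rewrite /GRing.scale /= mulr0 => /esym/eqP; rewrite oner_eq0.
apply/eqP => w0; move: qw; rewrite w0 (lin0 lq) => /esym/eqP; by rewrite oner_eq0.
Qed.

Lemma span2_zero (R : realType) (V : vectType R) (u w v : V) (phi : V -> R^o) :
  linear phi -> phi u = 0 -> phi w = 0 -> v \in <<[:: u; w]>>%VS -> phi v = 0.
Proof.
move=> lp pu pw /mem_span2 [c [d ->]].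
by rewrite (linD lp) !(linZ lp) pu pw !scaler0 addr0.
Qed.

Lemma lin_fz (R : realType) (V : lmodType R) (f : V -> R^o) (z : V) (c : R) :
  linear f -> linear (fun u => f u *: z - c *: u).
Proof.
move=> fl a u w /=; rewrite fl.
have -> : (a *: f u + f w) = (a * f u + f w :> R) by [].
rewrite scalerDl scalerDr !scalerBr !scalerA [c * a]mulrC.
by rewrite opprD addrACA.
Qed.

Lemma lin_cf (R : realType) (V : lmodType R) (f : V -> R^o) (z : V) (c : R) :
  linear f -> linear (fun u => c *: u - f u *: z).
Proof.
move=> fl a u w /=; rewrite fl.
have -> : (a *: f u + f w) = (a * f u + f w :> R) by [].
rewrite scalerDl scalerDr !scalerBr !scalerA [c * a]mulrC.
by rewrite opprD addrACA.
Qed.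

Lemma fform_basis (R : realType) (V : vectType R) (br : V -> V -> V) (m : nat)
  (X : m.-tuple V) :
  is_lie_bracket br -> basis_of fullv X ->
  (forall x y, free [:: x; y] -> br x y \in <<[:: x; y]>>%VS) ->
  exists f : V -> R^o, linear f /\ forall u v, br u v = f u *: v - f v *: u.
Proof.
move=> lie bX SP; have [bl blr alt _] := lie.
have fX := basis_free bX.
have cl : forall i : 'I_m, linear (coord X i : V -> R^o).
  by move=> i a u v; rewrite linearD linearZ.
have c1 : forall i, coord X i X`_i = 1 by move=> i; rewrite coord_free // eqxx.
have c0 : forall i j : 'I_m, i != j -> coord X j X`_i = 0.
  by move=> i j h; rewrite coord_free // (negbTE h).
have free_ij : forall i j : 'I_m, i != j -> free [:: X`_i; X`_j].
  move=> i j h; apply: (free2_sep (cl i) (cl j)); rewrite ?c1 //.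
  by rewrite c0 // eq_sym.
have z : forall i j k : 'I_m, i != j -> k != i -> k != j ->
    coord X k (br X`_i X`_j) = 0.
  move=> i j k hij hki hkj.
  apply: (span2_zero (cl k) _ _ (SP _ _ (free_ij i j hij))).
    by rewrite c0 // eq_sym.
  by rewrite c0 // eq_sym.
pose beta (i j : 'I_m) := coord X j (br X`_i X`_j).
have bij : forall i j k : 'I_m, i != j -> i != k -> j != k -> beta i j = beta i k.
  move=> i j k hij hik hjk.
  have fr : free [:: X`_i; X`_j + X`_k].
    apply: (free2_sep (cl i) (cl j)); rewrite ?c1 //.
      by rewrite (linD (cl i)) !c0 ?addr0 // eq_sym.
    by rewrite (linD (cl j)) c1 c0 ?addr0 // eq_sym.
  have [c [d e]] := mem_span2 (SP _ _ fr).
  rewrite (linD (bl _)) in e.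
  have ej := congr1 (coord X j) e; have ek := congr1 (coord X k) e.
  rewrite !linearD !linearZ /= in ej ek.
  rewrite (z i k j) // ?(eq_sym j) // addr0 in ej.
  rewrite (z i j k) // ?(eq_sym k) // add0r in ek.
  rewrite /beta ej ek !c1 (c0 i j hij) (c0 i k hik) (c0 j k hjk) (c0 k j (ltac:(by rewrite eq_sym))).
  by rewrite !mulr0 !add0r !addr0 mulr1.
pose fi (i : 'I_m) := beta i (odflt i [pick j | j != i]).
have fij : forall i j : 'I_m, i != j -> beta i j = fi i.
  move=> i j h; rewrite /fi; case: pickP => [k hk | none] /=; last first.
    by have := none j; rewrite eq_sym h.
  case: (eqVneq j k) => [-> // | hjk]; apply: bij => //.
  by rewrite eq_sym.
have brij : forall i j : 'I_m, i != j ->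
    br X`_i X`_j = (- fi j) *: X`_i + fi i *: X`_j.
  move=> i j h.
  have [c [d e]] := mem_span2 (SP _ _ (free_ij i j h)).
  have dj : d = fi i.
    rewrite -(fij i j h) /beta e linearD !linearZ /= c1 (c0 i j h).
    by rewrite mulr0 add0r mulr1.
  have ci : c = - fi j.
    have := fij j i (ltac:(by rewrite eq_sym)).
    rewrite /beta (br_antisym lie) e linearN linearD !linearZ /= c1 (c0 j i (ltac:(by rewrite eq_sym))).
    by rewrite mulr0 addr0 mulr1 => <-; rewrite opprK.
  by rewrite e dj ci.
pose f (v : V) : R^o := \sum_i coord X i v * fi i.
have fl : linear f.
  move=> a u v; rewrite /f /GRing.scale /= mulr_sumr -big_split; apply: eq_bigr => i _ /=.
  by rewrite linearD linearZ /= mulrDl mulrA.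
have fX_ : forall k : 'I_m, f X`_k = fi k.
  move=> k; rewrite /f (bigD1 k) //= c1 mul1r big1 ?addr0 // => i hi.
  by rewrite c0 ?mul0r // eq_sym.
have spanX : <<X>>%VS = fullv := span_basis bX.
have step1 : forall (i : 'I_m) v, br X`_i v = f X`_i *: v - f v *: X`_i.
  move=> i v.
  apply: (@lin_eq_span R V V (br X`_i) (fun v => f X`_i *: v - f v *: X`_i) X) => //.
  - exact: lin_cf.
  - move=> b /(nthP 0) [j hj <-]; rewrite size_tuple in hj.
    have -> : j = Ordinal hj by [].
    case: (eqVneq i (Ordinal hj)) => [<- | h].
      by rewrite alt subrr.
    by rewrite brij // !fX_ addrC scaleNr.
  - by rewrite spanX memvf.
exists f; split=> // u v.
apply: (@lin_eq_span R V V (fun u => br u v) (fun u => f u *: v - f v *: u) X) => //.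
- exact: lin_fz.
- move=> b /(nthP 0) [j hj <-]; rewrite size_tuple in hj.
  by have -> := step1 (Ordinal hj) v.
- by rewrite spanX memvf.
Qed.

Lemma bil_basis (R : realType) (V : vectType R) (br : V -> V -> V) (m : nat)
  (X : m.-tuple V) (f : V -> R^o) :
  is_lie_bracket br -> basis_of fullv X -> linear f ->
  (forall i j : 'I_m, br X`_i X`_j = f X`_i *: X`_j - f X`_j *: X`_i) ->
  forall u v, br u v = f u *: v - f v *: u.
Proof.
move=> [bl blr alt _] bX fl hij.
have spanX : <<X>>%VS = fullv := span_basis bX.
have step1 : forall (i : 'I_m) v, br X`_i v = f X`_i *: v - f v *: X`_i.
  move=> i v.
  apply: (@lin_eq_span R V V (br X`_i) (fun v => f X`_i *: v - f v *: X`_i) X) => //.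
  - exact: lin_cf.
  - move=> b /(nthP 0) [j hj <-]; rewrite size_tuple in hj.
    exact: (hij i (Ordinal hj)).
  - by rewrite spanX memvf.
move=> u v.
apply: (@lin_eq_span R V V (fun u => br u v) (fun u => f u *: v - f v *: u) X) => //.
- exact: lin_fz.
- move=> b /(nthP 0) [j hj <-]; rewrite size_tuple in hj.
  by have -> := step1 (Ordinal hj) v.
- by rewrite spanX memvf.
Qed.

Lemma zmod4 (G : zmodType) (a b c d : G) :
  a - b = (c - d) + (a - - d) + (- c - b).
Proof.
rewrite opprK [(c - d) + _]addrACA addNr addr0 addrACA subrr add0r.
by [].
Qed.

Lemma integ_f (R : realType) (V : lmodType R) (br : V -> V -> V) (f : V -> R^o) J :
  linear f -> (forall u v, br u v = f u *: v - f v *: u) -> almost_complex J ->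
  integrable br J.
Proof.
move=> fl hf [Jl Jsq] X Y.
rewrite !hf !(linD Jl) !(linN Jl) !(linZ Jl) !Jsq !scalerN.
exact: zmod4.
Qed.

Lemma build_e (R : realType) (V : vectType R) (n : nat) (f : V -> R^o) :
  linear f -> \dim (fullv : {vspace V}) = (2 * n)%N -> (exists v, f v != 0) ->
  exists e : (2 * n).-tuple V, basis_of fullv e /\
    forall i : 'I_(2 * n), f (tnth e i) = (val i == 0%N)%:R.
Proof.
move=> fl hd [v0 fv0].
pose B := vbasis (fullv : {vspace V}).
have bB : basis_of fullv B := vbasisP fullv.
have sB : size B = (2 * n)%N by rewrite size_tuple hd.
pose b k := B`_k.
have [k [hk fk]] : exists k, (k < 2 * n)%N /\ f (b k) != 0.
  apply: NNPP => H; move/negP: fv0; apply.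
  have := @lin_eq_span R V R^o f (fun _ => 0) B fl.
  move=> h; apply/eqP; apply: h.
  - by move=> a x y; rewrite scaler0 addr0.
  - move=> w /(nthP 0) [j hj <-] /=; apply/eqP; apply: contraT => hne.
    by case: H; exists j; split; [rewrite -sB | ].
  - by rewrite (span_basis bB) memvf.
pose u := b 0%N + (if f (b 0%N) == 0 then b k else 0).
have fu : f u != 0.
  rewrite /u (linD fl); case: ifP => [/eqP -> | /negbT h]; first by rewrite add0r.
  by rewrite (lin0 fl) addr0.
pose e := [tuple (if val i == 0%N then (f u)^-1 *: u else b i - (f (b i) / f u) *: u) | i < 2 * n].
exists e; split; last first.
  move=> i; rewrite tnth_mktuple; case: eqP => _.
    by rewrite (linZ fl) /GRing.scale /= mulVf.
  rewrite (linD fl) (linN fl) (linZ fl) /GRing.scale /= mulfVK //.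
  by rewrite subrr.
have uin : u \in <<e>>%VS.
  have hn : (0 < 2 * n)%N by lia.
  have := memv_span (mem_tnth (Ordinal hn) e); rewrite tnth_mktuple /=.
  by move/(memvZ (f u)); rewrite scalerA mulfV // scale1r.
have bin : forall j, (0 < j < 2 * n)%N -> b j \in <<e>>%VS.
  move=> j /andP [j0 jn].
  have := memv_span (mem_tnth (Ordinal jn) e); rewrite tnth_mktuple /=.
  rewrite (negbTE (lt0n_neq0 j0)) => h.
  have -> : b j = (b j - (f (b j) / f u) *: u) + (f (b j) / f u) *: u.
    by rewrite subrK.
  apply: memvD; first exact: h.
  by apply: memvZ; exact: uin.
rewrite basisEdim size_tuple hd leqnn andbT -(span_basis bB).
apply/span_subvP => w /(nthP 0) [j hj <-]; rewrite sB in hj.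
case: (posnP j) => [-> | j0]; last by apply: bin; rewrite j0.
have -> : B`_0 = u - (if f (b 0%N) == 0 then b k else 0) by rewrite addrK.
rewrite memvB //; case: eqP => h; last by rewrite mem0v.
apply: bin; rewrite hk andbT lt0n; apply/eqP => k0.
by move: fk; rewrite k0 h eqxx.
Qed.

Unset Implicit Arguments.

Theorem proposition4p1 (R : realType) (V : vectType R) (br : V -> V -> V) (n : nat) :
  is_lie_bracket br ->
  \dim (fullv : {vspace V}) = (2 * n)%N ->
  (exists x y : V, br x y != 0) ->
  ((forall J : V -> V, almost_complex J -> integrable br J) <->
   exists e : (2 * n).-tuple V,
     basis_of fullv e /\
     forall i j : 'I_(2 * n),
       br (tnth e i) (tnth e j) =
         if (val i == 0%N) && (val j != 0%N) then tnth e j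
         else if (val j == 0%N) && (val i != 0%N) then - tnth e i
         else 0).
Proof.
move=> lie hd [x [y nab]]; split.
  move=> HJ.
  have [f [fl hf]] := fform_basis lie (vbasisP fullv) (span2 lie hd HJ).
  have fnz : exists v, f v != 0.
    move: nab; rewrite hf.
    have [hx|hx] := eqVneq (f x) 0; last by exists x.
    have [hy|hy] := eqVneq (f y) 0; last by exists y.
    by rewrite hx hy !scale0r subrr eqxx.
  have [e [be fe]] := build_e fl hd fnz.
  exists e; split => // i j.
  rewrite hf !fe.
  case: (eqVneq (val i) 0%N) => hi; case: (eqVneq (val j) 0%N) => hj /=.
  - have -> : i = j by apply: val_inj; rewrite hi hj.
    by rewrite subrr.
  - by rewrite scale1r scale0r subr0.
  - by rewrite scale1r scale0r sub0r.
  - by rewrite !scale0r subrr.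
move=> [e [be he]] J ac.
have n0 : (0 < 2 * n)%N.
  rewrite lt0n; apply/eqP => n0; move: nab.
  have fz : (fullv : {vspace V}) = 0%VS by apply/eqP; rewrite -dimv_eq0 hd n0.
  have : x \in (fullv : {vspace V}) by rewrite memvf.
  rewrite fz memv0 => /eqP ->.
  by have [_ blr _ _] := lie; rewrite (lin0 (blr y)) eqxx.
pose i0 := Ordinal n0.
pose f : V -> R^o := coord e i0.
have fl : linear f by move=> a u w; rewrite /f linearD linearZ.
have fe : forall i : 'I_(2 * n), f e`_i = (val i == 0%N)%:R.
  by move=> i; rewrite /f coord_free ?(basis_free be) // -val_eqE.
apply: (integ_f fl _ ac).
apply: (bil_basis lie be fl) => i j.
have := he i j; rewrite !(tnth_nth 0) => ->.
rewrite !fe.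
case: (eqVneq (val i) 0%N) => hi; case: (eqVneq (val j) 0%N) => hj /=.
- have -> : i = j by apply: val_inj; rewrite hi hj.
  by rewrite subrr.
- by rewrite scale1r scale0r subr0.
- by rewrite scale1r scale0r sub0r.
- by rewrite !scale0r subrr.
Qed.
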